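(* In the free-group setting described in the context, the extension $\pi_Y\circ\pi_f:X_f\to Y$ is point-distal.
   Context: Let $r\ge2$ and $\Gamma=F_r$ free on $S=\{a,b,a_3,\dots,a_r\}$. $Y$ is the Gromov boundary (infinite reduced words in $S\cup S^{-1}$, $\Gamma$ acting by concatenation and cancellation). For nontrivial $s\in\Gamma$, $y\in Y$ starts with $s$ if $y=sy'$ with the last letter of $s$ not inverse to the first letter of $y'$; $V_s$ is the set of such $y$; $a^\infty$ is the constant word $a$. Let $\{\Gamma_n\}$ be strictly decreasing finite-index normal subgroups with trivial intersection, $Z=\varprojlim\Gamma/\Gamma_n$ with left translation, $\pi_n:Z\to\Gamma/\Gamma_n$, $X=Y\times Z$ with product action, $\pi_Y:X\to Y$ the projection. For $n\ge2$ choose $\gamma_n\in\Gamma_{n-1}\setminus\Gamma_n$; $u_n=a^nba^{-n}b^{-1}$, $D_n=V_{u_n}$, $C_n=\pi_n^{-1}(\gamma_n\Gamma_n)$, $X_+=\bigcup_{n\ge2}D_n\times C_n$, $X_-=X\setminus(X_+\cup\{(a^\infty,e_\Gamma)\})$, $f=\pm1$ on $X_\pm$. $\pi_f:X_f\to X$ is the McMahon extension: the (unique up to conjugacy) minimal continuous action on a compact metrizable space with equivariant continuous surjection whose fibers are single points off $\Gamma(a^\infty,e_\Gamma)$ and two points on it, such that $f\circ\pi_f$ extends continuously to $X_f$. An extension $\pi:\tilde X\to Y$ is point-distal if there is $x\in\tilde X$ with dense orbit such that for every $x'\ne x$ with $\pi(x')=\pi(x)$ the orbit closure of $(x,x')$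 in $\tilde X^2$ misses the diagonal. *)

(* Defs.v *)
From HB Require Import structures.
From mathcomp Require Import all_boot all_order all_algebra.
From mathcomp Require Import all_classical all_reals topology normedtype.
Set Implicit Arguments. Unset Strict Implicit. Unset Printing Implicit Defensive.
Import Order.TTheory GRing.Theory Num.Theory.
Import numFieldNormedType.Exports.

(* Free group F_r with r = m.+2 generators (so r >= 2 for every m).         *)
(* A letter is (generator index, sign): (i,true) = a_i, (i,false) = a_i^-1. *)
Definition letter (m : nat) := ('I_m.+2 * bool)%type.
Definition linv {m} (x : letter m) : letter m := (x.1, ~~ x.2).
Definition word (m : nat) := seq (letter m).

(* reduced words = elements of Gamma *)
Definition reducedw {m} (w : word m) : bool :=
  if w is x :: w' then path (fun x y => y != linv x) x w' else true.

Definition cons_red {m} (x : letter m) (w : word m) : word m :=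
  if w is y :: w' then (if y == linv x then w' else x :: w) else [:: x].
Definition red {m} (w : word m) : word m := foldr cons_red [::] w.
Definition mul {m} (u v : word m) : word m := red (u ++ v).
Definition winv {m} (u : word m) : word m := rev (map linv u).

Definition ga {m} : letter m := (ord0, true).
Definition gb {m} : letter m := (lift ord0 ord0, true).

Definition uw {m} (n : nat) : word m :=
  nseq n ga ++ [:: gb] ++ nseq n (linv ga) ++ [:: linv gb].

(* Gromov boundary Y: infinite reduced words *)
Definition isY {m} (y : nat -> letter m) : Prop := forall k, y k.+1 != linv (y k).

(* number of cancellations between the reversed word l and the infinite word y *)
Fixpoint ncancel {m} (l : word m) (y : nat -> letter m) : nat :=
  if l is x :: l' then
    (if y 0%N == linv x then (ncancel l' (fun n => y n.+1)).+1 else 0%N)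
  else 0%N.

(* action of a reduced word g on Y by concatenation and cancellation *)
Definition actY {m} (g : word m) (y : nat -> letter m) : nat -> letter m :=
  let k := ncancel (rev g) y in
  let p := (size g - k)%N in
  fun n => if (n < p)%N then nth (y 0%N) g n else y (n - p + k)%N.

(* y starts with s (for y in Y, the non-cancellation condition is automatic) *)
Definition startsY {m} (s : word m) (y : nat -> letter m) : Prop :=
  forall k, (k < size s)%N -> y k = nth (y 0%N) s k.

(* Family {Gamma_n}_{n>=1} of strictly decreasing finite-index normal subgroups
   with trivial intersection (membership only matters on reduced words;
   the value at n = 0 is ignored). *)
Definition good_family {m} (G : nat -> word m -> Prop) : Prop :=
  [/\ forall n, (1 <= n)%N ->
        [/\ G n [::],
            forall u v, reducedw u -> reducedw v -> G n u -> G n v -> G n (mul u v),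
            forall u, reducedw u -> G n u -> G n (winv u),
            forall g u, reducedw g -> reducedw u -> G n u -> G n (mul (mul g u) (winv g))
          & exists s : seq (word m), forall g, reducedw g ->
              exists2 t, t \in s & reducedw t /\ G n (mul (winv t) g)],
      forall n, (1 <= n)%N ->
        (forall u, reducedw u -> G n.+1 u -> G n u) /\
        (exists u, [/\ reducedw u, G n u & ~ G n.+1 u])
    & forall u, reducedw u -> (forall n, (1 <= n)%N -> G n u) -> u = [::]].

Definition ceq {m} (G : nat -> word m -> Prop) (n : nat) (u v : word m) : Prop :=
  G n (mul (winv u) v).

(* Z = inverse limit of Gamma/Gamma_n, points represented by sequences of
   coset representatives z n (n >= 1), compatible: z_{n+1} Gamma_{n+1} ⊆ z_n Gamma_n *)
Definition isZ {m} (G : nat -> word m -> Prop) (z : nat -> word m) : Prop :=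
  (forall n, reducedw (z n)) /\ (forall n, (1 <= n)%N -> ceq G n (z n) (z n.+1)).

Definition ptX (m : nat) := ((nat -> letter m) * (nat -> word m))%type.

Definition isX {m} (G : nat -> word m -> Prop) (x : ptX m) : Prop :=
  isY x.1 /\ isZ G x.2.

Definition xeq {m} (G : nat -> word m -> Prop) (x x' : ptX m) : Prop :=
  (forall k, x.1 k = x'.1 k) /\ (forall n, (1 <= n)%N -> ceq G n (x.2 n) (x'.2 n)).

Definition actX {m} (g : word m) (x : ptX m) : ptX m :=
  (actY g x.1, fun n => mul g (x.2 n)).

Definition x0 {m} : ptX m := (fun _ => ga, fun _ => [::]).

Definition in_orbit0 {m} (G : nat -> word m -> Prop) (x : ptX m) : Prop :=
  exists g, reducedw g /\ xeq G x (actX g x0).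

(* basic neighbourhoods of X: agree on the first N letters of Y and on
   levels 1..N of Z *)
Definition agreeX {m} (G : nat -> word m -> Prop) (N : nat) (x x' : ptX m) : Prop :=
  (forall k, (k < N)%N -> x.1 k = x'.1 k) /\
  (forall n, (1 <= n <= N)%N -> ceq G n (x.2 n) (x'.2 n)).

(* X_+ = union_{n>=2} D_n x C_n, C_n = pi_n^{-1}(gamma_n Gamma_n) *)
Definition inXplus {m} (G : nat -> word m -> Prop) (gam : nat -> word m) (x : ptX m) : Prop :=
  exists n, [/\ (2 <= n)%N, startsY (uw n) x.1 & ceq G n (gam n) (x.2 n)].

Local Open Scope classical_set_scope.

Definition cont_action {m} (T : topologicalType) (act : word m -> T -> T) : Prop :=
  [/\ forall t, act [::] t = t,
      forall g h t, reducedw g -> reducedw h -> act (mul g h) t = act g (act h t)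
    & forall g, reducedw g -> continuous (act g)].

Definition orbit {m} (T : Type) (act : word m -> T -> T) (t : T) : set T :=
  [set s | exists g, reducedw g /\ s = act g t].

Definition minimal_action {m} (T : topologicalType) (act : word m -> T -> T) : Prop :=
  forall t, closure (orbit act t) = setT.

(* McMahon extension pi_f : X_f -> X (characterizing properties) *)
Definition mcmahon {m} (G : nat -> word m -> Prop) (gam : nat -> word m)
  (R : realType) (T : pseudoMetricType R) (act : word m -> T -> T)
  (pif : T -> ptX m) : Prop :=
  [/\ [/\ hausdorff_space T, compact [set: T],
      cont_action act & minimal_action act],
      (forall t, isX G (pif t))
      /\ (forall g t, reducedw g -> xeq G (pif (act g t)) (actX g (pif t)))
      /\ (forall t N, \forall t' \near t, agreeX G N (pif t) (pif t'))
      /\ (forall x, isX G x -> exists t, xeq G (pif t) x),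
      (forall x, isX G x -> ~ in_orbit0 G x ->
         forall t t', xeq G (pif t) x -> xeq G (pif t') x -> t = t')
      /\ (forall x, isX G x -> in_orbit0 G x ->
         exists t1 t2, [/\ t1 <> t2, xeq G (pif t1) x, xeq G (pif t2) x &
                        forall t, xeq G (pif t) x -> t = t1 \/ t = t2])
    & (* f o pi_f extends continuously to X_f *)
      exists F : T -> R, continuous F /\
        forall t, ~ xeq G (pif t) x0 ->
          (inXplus G gam (pif t) -> F t = 1%R) /\
          (~ inXplus G gam (pif t) -> F t = (-1)%R)].

Definition point_distal {m} (T : topologicalType) (act : word m -> T -> T)
  (p : T -> nat -> letter m) : Prop :=
  exists x, closure (orbit act x) = setT /\
    forall x', x' <> x -> (forall k, p x' k = p x k) ->
      forall z, ~ closure [set st | exists g, reducedw g /\ st = (act g x, act g x')] (z, z).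

(* Main.v *)
Require Import Defs.
From HB Require Import structures.
From mathcomp Require Import all_boot all_order all_algebra.
From mathcomp Require Import all_classical all_reals topology normedtype.
Set Implicit Arguments. Unset Strict Implicit. Unset Printing Implicit Defensive.

Section FG.
Variable m : nat.
Implicit Types (x y : letter m) (u v w : word m).

Lemma linvK x : linv (linv x) = x.
Proof. by case: x => a b; rewrite /linv /= negbK. Qed.

Lemma reduced_cons x w : reducedw (x :: w) = reducedw w && (if w is y :: _ then y != linv x else true).
Proof. by case: w => [|y w] //=; rewrite andbC. Qed.

Lemma cons_red_reduced x w : reducedw w -> reducedw (cons_red x w).
Proof.
case: w => [|y w] // H; rewrite /cons_red; case: ifP => Hy.
  by move: H; rewrite reduced_cons => /andP[].
by rewrite reduced_cons H Hy.
Qed.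

Lemma red_reduced w : reducedw (red w).
Proof. by elim: w => //= x w IH; apply: cons_red_reduced. Qed.

Lemma cons_redK x w : reducedw w -> cons_red (linv x) (cons_red x w) = w.
Proof.
case: w => [|y w] /=; first by rewrite linvK eqxx.
case: ifP => [/eqP Ey|Ny].
  case: w => [|z w] /=; first by rewrite Ey.
  move=> /andP[Hz _]. rewrite Ey linvK in Hz. by rewrite Ey linvK (negbTE Hz).
by move=> _ /=; rewrite linvK eqxx.
Qed.

Lemma foldr_reduced w u : reducedw w -> reducedw (foldr cons_red w u).
Proof. by move=> Hw; elim: u => //= x u IH; apply: cons_red_reduced. Qed.

Lemma foldr_cons_red w x r : reducedw w ->
  foldr cons_red w (cons_red x r) = cons_red x (foldr cons_red w r).
Proof.
move=> Hw; case: r => [|y r] //=. case: ifP => [/eqP Ey|] // .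
by rewrite Ey -{1}(linvK x) cons_redK // foldr_reduced.
Qed.

Lemma foldr_red w u : reducedw w -> foldr cons_red w u = foldr cons_red w (red u).
Proof.
by move=> Hw; elim: u => //= x u IH; rewrite foldr_cons_red // IH.
Qed.

Lemma red_id w : reducedw w -> red w = w.
Proof.
elim: w => // x w IH; rewrite reduced_cons => /andP[Hw Hh] /=.
rewrite IH //; case: w Hw Hh {IH} => //= y w _ Hy; by rewrite (negbTE Hy).
Qed.

Lemma red_cat u v : red (u ++ v) = foldr cons_red (red v) u.
Proof. by rewrite /red foldr_cat. Qed.

Lemma mul_reduced u v : reducedw (Defs.mul u v).
Proof. exact: red_reduced. Qed.

Lemma mulA u v w : Defs.mul (Defs.mul u v) w = Defs.mul u (Defs.mul v w).
Proof.
rewrite /Defs.mul red_cat -foldr_red ?red_reduced // red_cat.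
by rewrite (red_id (red_reduced _)) red_cat foldr_cat.
Qed.

Lemma mul0 u : Defs.mul [::] u = red u.
Proof. by []. Qed.

Lemma mulr0 u : reducedw u -> Defs.mul u [::] = u.
Proof. by move=> H; rewrite /Defs.mul cats0 red_id. Qed.

Lemma cancel_foldr w u : reducedw w ->
  foldr cons_red (foldr cons_red w u) (winv u) = w.
Proof.
move=> Hw; elim: u => //= x u IH.
rewrite /winv /= rev_cons -cats1 foldr_cat /= cons_redK ?foldr_reduced //.
Qed.

Lemma mulVu u : Defs.mul (winv u) u = [::].
Proof. by rewrite /Defs.mul red_cat cancel_foldr. Qed.

Lemma winvK u : winv (winv u) = u.
Proof. by rewrite /winv map_rev revK -map_comp map_id_in // => x _; rewrite /= linvK. Qed.

Lemma muluV u : Defs.mul u (winv u) = [::].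
Proof. by rewrite -{1}(winvK u) mulVu. Qed.

Lemma winv_reduced u : reducedw u -> reducedw (winv u).
Proof.
elim/last_ind: u => // p z IH.
rewrite /winv map_rcons rev_rcons.
case: p IH => [|y p] IH; first by [].
move=> H; have /andP[Hp Hz] : reducedw (y::p) && (z != linv (last y p)).
  by move: H; rewrite /reducedw /= rcons_path.
have := IH Hp; rewrite /winv => Hw.
rewrite reduced_cons Hw /= -map_cons (lastI y p) map_rcons rev_rcons linvK /=.
by apply/eqP => E; move: Hz; rewrite -E eqxx.
Qed.

Definition e u v := Defs.mul (winv u) v.

Lemma e_sym u v : reducedw u -> reducedw v -> winv (e u v) = e v u.
Proof.
move=> Hu Hv.
have Hh : Defs.mul (e u v) (e v u) = [::].
  rewrite /e mulA -(mulA v) muluV mul0 red_id // mulVu //.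
rewrite -(mulr0 (winv_reduced (mul_reduced _ _))) -Hh -mulA mulVu mul0.
by rewrite red_id // mul_reduced.
Qed.

Lemma e_trans u v w : reducedw w -> Defs.mul (e u v) (e v w) = e u w.
Proof. by move=> Hw; rewrite /e mulA -(mulA v) muluV mul0 red_id. Qed.

Lemma e_mul g u v : reducedw u -> e (Defs.mul g u) (Defs.mul g v) = e u v.
Proof.
move=> Hu; rewrite /e.
set k := winv (Defs.mul g u).
have H1 : Defs.mul k (Defs.mul g u) = [::] by rewrite mulVu.
have H2 : Defs.mul k g = winv u.
  have -> : Defs.mul k g = Defs.mul (Defs.mul (Defs.mul k g) u) (winv u).
    by rewrite mulA muluV mulr0 // mul_reduced.
  by rewrite (mulA k g u) H1 mul0 red_id // winv_reduced.
by rewrite -mulA H2.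
Qed.

End FG.

Section Ceq.
Variable m : nat.
Variable G : nat -> word m -> Prop.
Variable n : nat.
Hypothesis G0 : G n [::].
Hypothesis Gmul : forall u v, reducedw u -> reducedw v -> G n u -> G n v -> G n (Defs.mul u v).
Hypothesis Ginv : forall u, reducedw u -> G n u -> G n (winv u).

Lemma ceq_sym u v : reducedw u -> reducedw v -> ceq G n u v -> ceq G n v u.
Proof.
move=> Hu Hv H; rewrite /ceq -/(e v u) -e_sym //; apply: Ginv => //; exact: mul_reduced.
Qed.

Lemma ceq_trans u v w : reducedw w -> ceq G n u v -> ceq G n v w -> ceq G n u w.
Proof.
move=> Hw H1 H2; rewrite /ceq -/(e u w) -(e_trans u v Hw).
by apply: Gmul => //; exact: mul_reduced.
Qed.

Lemma ceq_mul g u v : reducedw u -> ceq G n (Defs.mul g u) (Defs.mul g v) -> ceq G n u v.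
Proof. by move=> Hu; rewrite /ceq -/(e _ _) e_mul. Qed.

End Ceq.

Local Open Scope classical_set_scope.

Theorem lemma5p3 (m : nat) (G : nat -> word m -> Prop) (gam : nat -> word m)
  (R : realType) (T : pseudoMetricType R) (act : word m -> T -> T)
  (pif : T -> ptX m) :
  good_family G ->
  (forall n, (2 <= n)%N -> [/\ reducedw (gam n), G n.-1 (gam n) & ~ G n (gam n)]) ->
  mcmahon G gam act pif ->
  point_distal act (fun t => (pif t).1).
Proof.
move=> [Hgrp _ _] _ [[_ _ _ Hmin] [HX [Heq [Hcont Hsurj]]] [Hfib1 _] _].
have Hred : forall t n, reducedw ((pif t).2 n) by move=> t n; exact: (HX t).2.1.
pose X0 : ptX m := (fun _ => gb, fun _ => [::]).
have HX0 : isX G X0.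
  split.
    by move=> k; apply/eqP; case.
  split=> // n Hn; have [G0 _ _ _ _] := Hgrp n Hn; exact: G0.
have NX0 : ~ in_orbit0 G X0.
  move=> [g [_ [H1 _]]]; have := H1 (size g).
  rewrite /= /actY ltnNge leq_subr /=.
  by move=> E; have := f_equal (fun p : letter m => nat_of_ord p.1) E.
have [x Hx] := Hsurj X0 HX0.
exists x; split; first exact: Hmin.
move=> x' Hne Hy z Hcl.
have Hc : forall n, (1 <= n)%N -> ceq G n ((pif x).2 n) ((pif x').2 n).
  move=> n Hn; have [G0 Gmul Ginv _ _] := Hgrp n Hn.
  have Hn' : (1 <= n <= n)%N by rewrite Hn leqnn.
  have HP := Hcont z n.
  have [st [[g [Hg ->]] [/= [_ HA] [_ HB]]]] :
      exists st, (exists g, reducedw g /\ st = (act g x, act g x')) /\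
        ((fun t' => agreeX G n (pif z) (pif t')) st.1 /\
         (fun t' => agreeX G n (pif z) (pif t')) st.2).
    have Hnb : nbhs (z, z) (fun p : T * T => agreeX G n (pif z) (pif p.1) /\ agreeX G n (pif z) (pif p.2)).
      exists (fun t' => agreeX G n (pif z) (pif t'), fun t' => agreeX G n (pif z) (pif t')).
        by split.
      by move=> p [].
    have [st [Hst HB]] := Hcl _ Hnb.
    by exists st.
  have HA' := HA n Hn'; have HB' := HB n Hn'.
  have [_ E1] := Heq g x Hg; have [_ E2] := Heq g x' Hg.
  have E1' := E1 n Hn; have E2' := E2 n Hn.
  rewrite /actX /= in E1' E2'.
  apply: (ceq_mul (g := g)) => //.
  apply: (ceq_trans Gmul (v := (pif (act g x')).2 n)); first exact: mul_reduced.
    apply: (ceq_trans Gmul (v := (pif z).2 n)) => //.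
      apply: (ceq_trans Gmul (v := (pif (act g x)).2 n)) => //.
      by apply: ceq_sym => //; exact: mul_reduced.
    by apply: ceq_sym.
  done.
apply: Hne; apply: (Hfib1 X0 HX0 NX0 x' x); last exact: Hx.
split.
  by move=> k; rewrite Hy; exact: Hx.1.
move=> n Hn; have [G0 Gmul Ginv _ _] := Hgrp n Hn.
apply: (ceq_trans Gmul (v := (pif x).2 n)) => //.
  by apply: ceq_sym => //; exact: Hc.
exact: Hx.2.
Qed.
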